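(* Let $p$ be a prime, $k, r \geq 1$, $G_1, \dots, G_k$ finite-dimensional vector spaces over $\mathbb{F}_p$, $G^{\oplus} = G_1 \oplus \cdots \oplus G_k$ with each $G_i$ regarded as a subspace of $G^{\oplus}$, and $f \colon G^{\oplus} \to \mathbb{D}$. Let $\xi > 0$ and let $\psi \colon (G^{\oplus})^{r-1} \times G_1 \times \cdots \times G_k \to \mathbb{F}_p$ be a multilinear form such that \[\mathbb{E}_{a^{(1)}, \dots, a^{(r-1)} \in G^{\oplus},\ d_1 \in G_1, \dots, d_k \in G_k,\ x \in G^{\oplus}}\ \partial_{a^{(1)}} \cdots \partial_{a^{(r-1)}} \partial_{d_1} \cdots \partial_{d_k} f(x)\, \omega^{\psi(a^{(1)}, \dots, a^{(r-1)}, d_1, \dots, d_k)} \geq \xi,\] where $d_i \in G_i$ is viewed in $G^{\oplus}$. Let $i \in [r-1]$ and $j \in [k]$, and for $u \in G_j$ write $\iota_j(u) \in G^{\oplus}$ for the element with $j$-th component $u$ and all other components $0$. Define the multilinear form $\psi'_{ij} \colon (G^{\oplus})^{i-1} \times G_j \times (G^{\oplus})^{r-1-i} \times G_1 \times \cdots \times G_k \to \mathbb{F}_p$ by \begin{align*}\psi'_{ij}(a^{(1)}, \dots, a^{(i-1)}, u_j, a^{(i+1)}, \dots, a^{(r-1)}, d_1, \dots, d_k) =\ & \psi(a^{(1)}, \dots, a^{(i-1)}, \iota_j(u_j), a^{(i+1)}, \dots, a^{(r-1)}, d_1, \dots, d_{j-1}, d_j, d_{j+1}, \dots, d_k) \\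 &- \psi(a^{(1)}, \dots, a^{(i-1)}, \iota_j(d_j), a^{(i+1)}, \dots, a^{(r-1)}, d_1, \dots, d_{j-1}, u_j, d_{j+1}, \dots, d_k).\end{align*} Then $\operatorname{bias} \psi'_{ij} \geq \xi^8$.
   Context: $\mathbb{D} = \{z \in \mathbb{C} : |z| \leq 1\}$, $\omega = e^{2\pi i/p}$, $\mathbb{E}$ is the uniform average, $\partial_u f(x) = f(x+u)\overline{f(x)}$. For a multilinear form $\alpha$ on a product $V_1 \times \cdots \times V_s$ of $\mathbb{F}_p$-vector spaces, $\operatorname{bias}\alpha = \mathbb{E}_{v_1 \in V_1, \dots, v_s \in V_s} \omega^{\alpha(v_1, \dots, v_s)}$. *)

(* Defs.v *)
From HB Require Import structures.
From mathcomp Require Import all_boot all_order all_algebra.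
From mathcomp Require Import complex.
From mathcomp Require Import reals trigo.
Set Implicit Arguments. Unset Strict Implicit. Unset Printing Implicit Defensive.
Import Order.TTheory GRing.Theory Num.Theory.
Local Open Scope ring_scope.
Local Open Scope complex_scope.

Definition avg {C : numFieldType} (T : finType) (F : T -> C) : C :=
  (#|T|%:R)^-1 * \sum_(x : T) F x.

Section Setting.
Variables (p : nat) (k : nat) (n : 'I_k -> nat).

Definition Gj (j : 'I_k) := 'rV['F_p]_(n j).
Definition Gsum := {dffun forall j : 'I_k, Gj j}.

Definition gadd (g h : Gsum) : Gsum := [ffun j => g j + h j].
Definition gscale (c : 'F_p) (g : Gsum) : Gsum := [ffun j => c *: g j].

Definition iota (j : 'I_k) (u : Gj j) : Gsum :=
  [ffun l => dfwith (fun l : 'I_k => (0 : Gj l)) u l].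

Definition setA {r : nat} (a : {ffun 'I_r -> Gsum}) (l : 'I_r) (x : Gsum)
  : {ffun 'I_r -> Gsum} := [ffun m => if m == l then x else a m].
Definition setD (d : Gsum) (j : 'I_k) (u : Gj j) : Gsum :=
  [ffun l => dfwith (fun l => d l) u l].

(* psi : (G^+)^r' x G_1 x ... x G_k -> F_p, with the G_1 x..x G_k part
   packed as an element d of Gsum (d j = d_j) *)
Definition multilinear {r' : nat}
  (psi : {ffun 'I_r' -> Gsum} -> Gsum -> 'F_p) : Prop :=
  (forall (a : {ffun 'I_r' -> Gsum}) (d : Gsum) (l : 'I_r') (c : 'F_p) (x y : Gsum),
     psi (setA a l (gadd (gscale c x) y)) d
     = c * psi (setA a l x) d + psi (setA a l y) d) /\
  (forall (a : {ffun 'I_r' -> Gsum}) (d : Gsum) (j : 'I_k) (c : 'F_p) (x y : Gj j),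
     psi a (setD d (c *: x + y)) = c * psi a (setD d x) + psi a (setD d y)).

Variable R : realType.

Definition omega : R[i] :=
  (cos (2 * pi / p%:R)) +i* (sin (2 * pi / p%:R)).
Definition omegaF (x : 'F_p) : R[i] := omega ^+ (nat_of_ord x).

Definition deriv1 (u : Gsum) (f : Gsum -> R[i]) : Gsum -> R[i] :=
  fun x => f (gadd x u) * (f x)^*.
Definition derivs (hs : seq Gsum) (f : Gsum -> R[i]) : Gsum -> R[i] :=
  foldr deriv1 f hs.

Definition shifts {r' : nat} (a : {ffun 'I_r' -> Gsum}) (d : Gsum) : seq Gsum :=
  [seq a l | l <- enum 'I_r'] ++ [seq iota (d j) | j <- enum 'I_k].

(* psi'_{ij}(a^(1..i-1), u_j, a^(i+1..r-1), d): the entry a i is ignored *)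
Definition psi' {r' : nat} (psi : {ffun 'I_r' -> Gsum} -> Gsum -> 'F_p)
  (i : 'I_r') (j : 'I_k) (a : {ffun 'I_r' -> Gsum}) (u : Gj j) (d : Gsum) : 'F_p :=
  psi (setA a i (iota u)) d - psi (setA a i (iota (d j))) (setD d u).

(* The component a i is a dummy variable (psi' does not depend on it), so
   averaging over it as well does not change the value. *)
Definition bias_psi' {r' : nat} (psi : {ffun 'I_r' -> Gsum} -> Gsum -> 'F_p)
  (i : 'I_r') (j : 'I_k) : R[i] :=
  avg (fun a : {ffun 'I_r' -> Gsum} =>
  avg (fun u : Gj j =>
  avg (fun d : Gsum => omegaF (@psi' r' psi i j a u d)))).

End Setting.

(* Main.v *)
Require Import Defs.
From HB Require Import structures.
From mathcomp Require Import all_boot all_order all_algebra.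
From mathcomp Require Import complex.
From mathcomp Require Import reals trigo.
From mathcomp Require Import boolp lra ring.
Import Order.TTheory GRing.Theory Num.Theory.
Local Open Scope ring_scope.
Local Open Scope complex_scope.
Local Open Scope ring_scope.
Set Implicit Arguments. Unset Strict Implicit. Unset Printing Implicit Defensive.
Local Notation iota := Defs.iota.
Local Notation setD := Defs.setD.


Section Om.
Variables (R : realType) (p : nat).
Hypothesis pp : prime p.

Local Notation th := (2 * pi / p%:R : R).
Local Notation w := (omega p R).

Lemma omega_exp m : w ^+ m = (cos (th *+ m)) +i* (sin (th *+ m)).
Proof.
elim: m => [|m IH]; first by rewrite expr0 mulr0n cos0 sin0.
rewrite exprS IH /omega !(mulrS _ m) cosD sinD.
apply/eqP; rewrite eq_complex /=; apply/andP; split; apply/eqP => //.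
by rewrite addrC mulrC [X in _ + X]mulrC.
Qed.

Lemma p_neq0 : (p%:R : R) != 0.
Proof. by rewrite pnatr_eq0 -lt0n prime_gt0. Qed.

Lemma omega_p : w ^+ p = 1.
Proof.
rewrite omega_exp.
have -> : th *+ p = pi *+ 2.
  by rewrite -(mulr_natr (2 * pi / p%:R) p) divfK ?p_neq0 // mulr_natl.
by rewrite cos2pi sin2pi.
Qed.

Lemma omega_neq1 : w != 1.
Proof.
have p2 : (2 <= p)%N by apply: prime_gt1.
have th0 : 0 < th.
  apply: divr_gt0; last by rewrite ltr0n prime_gt0.
  by apply: mulr_gt0; [rewrite ltr0n | apply: pi_gt0].
have thpi : th <= pi.
  rewrite ler_pdivrMr ?ltr0n ?prime_gt0 // [2 * pi]mulrC ler_pM2l ?pi_gt0 //.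
  by rewrite (ler_nat R 2 p).
apply/negP => /eqP h; have c1 := congr1 (@complex.Re R) h; have s0 := congr1 (@complex.Im R) h.
rewrite /= in c1 s0.
move: thpi; rewrite le_eqVlt => /orP [/eqP e|hlt].
  by move: c1; rewrite e cospi; lra.
have := @sin_gt0_pi R th; rewrite th0 hlt s0 ltxx; by move=> /(_ isT).
Qed.

Lemma omegaF_add (a b : 'F_p) : omegaF R (a + b) = omegaF R a * omegaF R b.
Proof.
rewrite /omegaF -exprD -[RHS](expr_mod _ omega_p); congr (_ ^+ _).
have e := Fp_cast pp; rewrite /=. move: (Zp_trunc (pdiv p)) e a b => m e a b; move: (nat_of_ord a) (nat_of_ord b) => x y; by rewrite e.
Qed.

Lemma omegaF0 : omegaF R (0 : 'F_p) = 1.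
Proof. by rewrite /omegaF expr0. Qed.

Lemma omega_conjM : w^* * w = 1.
Proof.
rewrite /omega; change (Num.conj ?x) with (conjc x); rewrite /=; apply/eqP; rewrite eq_complex /=; apply/andP; split; apply/eqP.
  by rewrite mulNr opprK -!expr2 cos2Dsin2.
by rewrite mulNr mulrC addrN.
Qed.

Lemma omegaF_conjM (a : 'F_p) : (omegaF R a)^* * omegaF R a = 1.
Proof. by rewrite /omegaF rmorphXn -exprMn_comm ?omega_conjM ?expr1n // /GRing.comm mulrC. Qed.

Lemma omegaF_neq0 (a : 'F_p) : omegaF R a != 0.
Proof. by apply/negP => /eqP h; have := omegaF_conjM a; rewrite h mulr0 => /eqP; rewrite eq_sym oner_eq0. Qed.

Lemma omegaF_opp (a : 'F_p) : omegaF R (- a) = (omegaF R a)^*.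
Proof.
apply: (mulIf (omegaF_neq0 a)); rewrite omegaF_conjM -omegaF_add addNr omegaF0 //.
Qed.

Lemma omegaF_norm (a : 'F_p) : `|omegaF R a| = 1.
Proof.
apply/eqP; rewrite -sqrp_eq1 ?normr_ge0 // normCK mulrC omegaF_conjM //.
Qed.

Lemma omegaF1 : omegaF R (1 : 'F_p) = w.
Proof.
rewrite /omegaF; have e := Fp_cast pp.
suff -> : nat_of_ord (1 : 'F_p) = 1%N by rewrite expr1.
rewrite /=; move: (Zp_trunc (pdiv p)) e => m e; by rewrite modn_small.
Qed.

Lemma char_sum_ge0 (m : nat) (l : 'rV['F_p]_m -> 'F_p)
  (hl : forall c x y, l (c *: x + y) = c * l x + l y) :
  0 <= \sum_c omegaF R (l c).
Proof.
have hadd x y : l (x + y) = l x + l y by rewrite -[x]scale1r hl mul1r scale1r.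
have [/forallP h | /forallPn [c1 hc1]] := boolP [forall c, l c == 0].
  under eq_bigr => c _ do rewrite (eqP (h c)) omegaF0.
  by rewrite sumr_const ler0n.
set t := l c1 in hc1.
have l0 : l 0 = 0.
  by have := hadd 0 0; rewrite addr0 -{1}[l 0]addr0 => /addrI ->.
have hc0 : l (t^-1 *: c1) = 1 by rewrite -[_ *: _]addr0 hl l0 addr0 mulVf.
set S := \sum_c _.
have : S = S * w.
  rewrite {1}/S [LHS](reindex_inj (addIr (t^-1 *: c1))) /S mulr_suml.
  by apply: eq_bigr => c _; rewrite hadd omegaF_add hc0 omegaF1.
move/eqP; rewrite -subr_eq0 -{1}[S]mulr1 -mulrBr mulf_eq0 subr_eq0 [1 == _]eq_sym (negbTE omega_neq1) orbF.
by move/eqP ->.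
Qed.
End Om.


Section Z. Variable Z : zmodType.
Lemma zid1 (x a e : Z) : x - e + (a - x + e) = a.
Proof. by rewrite [a - x + e]addrAC addrCA [x - e - x]addrAC subrr add0r addrK. Qed.
Lemma zid2 (a c E : Z) : a + c + (E - c) = a + E.
Proof. by rewrite addrCA addrK addrC. Qed.
Lemma zid3 (x c E : Z) : x - c - (E - c) = x - E.
Proof. by rewrite opprB addrA subrK. Qed.
Lemma zid4 (a x c E : Z) : a + c - (x - c) + (E - c) = a - x + E + c.
Proof. by rewrite opprB addrA addrAC [a + c + (c - x) - c]addrAC addrK [c - x]addrC addrA addrAC. Qed.
End Z.

Section GS.
Variables (p k : nat) (n : 'I_k -> nat).
Local Notation G := (Gsum p n).
Definition g0 : G := [ffun l => 0].
Definition gopp (g : G) : G := [ffun l => - g l].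
Lemma gaddA : associative (@gadd p k n).
Proof. by move=> x y z; apply/ffunP => l; rewrite !ffunE addrA. Qed.
Lemma gaddC : commutative (@gadd p k n).
Proof. by move=> x y; apply/ffunP => l; rewrite !ffunE addrC. Qed.
Lemma gadd0 : left_id g0 (@gadd p k n).
Proof. by move=> x; apply/ffunP => l; rewrite !ffunE add0r. Qed.
Lemma gaddN : left_inverse g0 gopp (@gadd p k n).
Proof. by move=> x; apply/ffunP => l; rewrite !ffunE addNr. Qed.
HB.instance Definition _ := Finite.copy G {dffun forall j : 'I_k, Gj p n j}.
HB.instance Definition _ := GRing.isZmodule.Build G gaddA gaddC gadd0 gaddN.
Lemma gaddE (x y : G) : gadd x y = x + y. Proof. by []. Qed.
Lemma gaddEl (x y : G) (l : 'I_k) : (x + y) l = x l + y l. Proof. by rewrite -gaddE ffunE. Qed.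
Lemma goppEl (x : G) (l : 'I_k) : (- x) l = - x l. Proof. by rewrite /= ffunE. Qed.
Lemma g0El (l : 'I_k) : (0 : G) l = 0. Proof. by rewrite /= ffunE. Qed.
Section Ops.
Variables (j : 'I_k).
Local Notation V := (Gj p n j).

Lemma iota_j (u : V) : iota u j = u.
Proof. by rewrite ffunE dfwith_in. Qed.
Lemma iota_out (u : V) l : j != l -> iota u l = 0.
Proof. by move=> h; rewrite ffunE dfwith_out. Qed.
Lemma iotaD (u v : V) : iota (u + v) = iota u + iota v.
Proof.
apply/ffunP => l; rewrite gaddEl; have [<-|nl] := eqVneq j l.
  by rewrite !iota_j.
by rewrite !iota_out // addr0.
Qed.
Lemma iota0 : iota (0 : V) = 0.
Proof. by apply/ffunP => l; rewrite g0El; have [<-|nl] := eqVneq j l; rewrite ?iota_j ?iota_out. Qed.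
Lemma iotaN (u : V) : iota (- u) = - iota u.
Proof. by apply/eqP; rewrite -subr_eq0 opprK -iotaD addNr iota0. Qed.
Lemma iotaB (u v : V) : iota (u - v) = iota u - iota v.
Proof. by rewrite iotaD iotaN. Qed.
Lemma iotaZ (c : 'F_p) (u : V) : iota (c *: u) = gscale c (iota u).
Proof.
apply/ffunP => l; rewrite [RHS]ffunE; have [<-|nl] := eqVneq j l.
  by rewrite !iota_j.
by rewrite !iota_out // scaler0.
Qed.
Lemma iota_inj : injective (@iota p k n j).
Proof. by move=> u v h; rewrite -(iota_j u) -(iota_j v) h. Qed.

Lemma setD_j (d : G) (u : V) : setD d u j = u.
Proof. by rewrite ffunE dfwith_in. Qed.
Lemma setD_out (d : G) (u : V) l : j != l -> setD d u l = d l.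
Proof. by move=> h; rewrite ffunE dfwith_out. Qed.
Lemma setD_setD (d : G) (u v : V) : setD (setD d u) v = setD d v.
Proof.
apply/ffunP => l; have [<-|nl] := eqVneq j l; first by rewrite !setD_j.
by rewrite !setD_out.
Qed.
Lemma setD_id (d : G) : setD d (d j) = d.
Proof. by apply/ffunP => l; have [<-|nl] := eqVneq j l; rewrite ?setD_j ?setD_out. Qed.
Lemma addiota (d : G) (e : V) : d + iota e = setD d (d j + e).
Proof.
apply/ffunP => l; rewrite gaddEl; have [<-|nl] := eqVneq j l.
  by rewrite iota_j setD_j.
by rewrite iota_out // setD_out // addr0.
Qed.
Lemma setD_addiota (d : G) (e u : V) : setD (d + iota e) u = setD d u.
Proof. by rewrite addiota setD_setD. Qed.
Lemma setD_as_add (d : G) (u : V) : setD d u = d + iota (u - d j).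
Proof. by rewrite addiota addrC subrK. Qed.
End Ops.

Section OpsA.
Variables (r' : nat) (i : 'I_r').
Local Notation A := {ffun 'I_r' -> G}.
Lemma setA_i (a : A) x : setA a i x i = x.
Proof. by rewrite ffunE eqxx. Qed.
Lemma setA_out (a : A) x m : m != i -> setA a i x m = a m.
Proof. by move=> h; rewrite ffunE (negbTE h). Qed.
Lemma setA_setA (a : A) x y : setA (setA a i x) i y = setA a i y.
Proof. by apply/ffunP => m; rewrite !ffunE; case: (m == i). Qed.
Lemma setA_id (a : A) : setA a i (a i) = a.
Proof. by apply/ffunP => m; rewrite !ffunE; case: eqP => [->|]. Qed.
End OpsA.
End GS.


Section Der.
Variables (R : realType) (p k : nat) (n : 'I_k -> nat).
Local Notation G := (Gsum p n).
Implicit Types (g : G -> R[i]) (u v x : G).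

Lemma deriv1C u v g : deriv1 u (deriv1 v g) = deriv1 v (deriv1 u g).
Proof.
apply/funext => x; rewrite /deriv1 !gaddE !rmorphM /= !conjCK.
by rewrite -!addrA [v + u]addrC; ring.
Qed.

Lemma derivs_cat s t g : derivs (s ++ t) g = derivs s (derivs t g).
Proof. by rewrite /derivs foldr_cat. Qed.

Lemma derivs_comm1 u s g : deriv1 u (derivs s g) = derivs s (deriv1 u g).
Proof. by elim: s => //= v s IH; rewrite deriv1C IH. Qed.

Lemma derivs_comm s t g : derivs s (derivs t g) = derivs t (derivs s g).
Proof.
elim: s g => [|u s IH] g /=; first by [].
by rewrite IH derivs_comm1.
Qed.

Lemma derivs_perm s t g : perm_eq s t -> derivs s g = derivs t g.
Proof.
move=> h; apply: (@catCA_perm_subst _ _ (fun s => derivs s g)) h => s1 s2 s3.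
by rewrite !derivs_cat derivs_comm.
Qed.

Lemma derivs_bound s g : (forall x, `|g x| <= 1) -> forall x, `|derivs s g x| <= 1.
Proof.
move=> hg; elim: s => //= u s IH x.
rewrite /deriv1 normrM norm_conjC; apply: mulr_ile1 => //; exact: normr_ge0.
Qed.
End Der.

Section Shifts.
Variables (R : realType) (p k : nat) (n : 'I_k -> nat) (r' : nat) (i : 'I_r') (j : 'I_k).
Local Notation G := (Gsum p n).
Local Notation A := {ffun 'I_r' -> G}.

Definition rho (a : A) (d : G) : seq G :=
  [seq a l | l <- enum 'I_r' & l != i] ++ [seq iota (d l) | l <- enum 'I_k & l != j].

Lemma shifts_perm (a : A) (d : G) : perm_eq (shifts a d) (a i :: iota (d j) :: rho a d).
Proof.
rewrite /shifts /rho.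
have e1 : perm_eq (enum 'I_r') (i :: [seq l <- enum 'I_r' | l != i]).
  by rewrite -rem_filter ?enum_uniq // perm_to_rem // mem_enum.
have e2 : perm_eq (enum 'I_k) (j :: [seq l <- enum 'I_k | l != j]).
  by rewrite -rem_filter ?enum_uniq // perm_to_rem // mem_enum.
apply: perm_trans (perm_cat (perm_map (fun l => a l) e1) (perm_map (fun l => iota (d l)) e2)) _.
rewrite /= perm_cons -cat1s -[_ :: _ ++ _]cat1s.
by rewrite perm_catCA.
Qed.

Lemma derivs_shifts (f : G -> R[i]) (a : A) (d : G) (x : G) :
  derivs (shifts a d) f x =
  let F := derivs (rho a d) f in
  F (x + a i + iota (d j)) * (F (x + a i))^* * (F (x + iota (d j)))^* * F x.
Proof.
rewrite (derivs_perm _ (shifts_perm a d)) /= /deriv1 !gaddE rmorphM /= conjCK.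
by rewrite !mulrA.
Qed.

Lemma rho_setA (a : A) (b : G) (d : G) : rho (setA a i b) d = rho a d.
Proof.
rewrite /rho; congr (_ ++ _); apply/eq_in_map => l; rewrite mem_filter => /andP [h _].
by rewrite setA_out.
Qed.

Lemma rho_setD (a : A) (d : G) (u : Gj p n j) : rho a (setD d u) = rho a d.
Proof.
rewrite /rho; congr (_ ++ _); apply/eq_in_map => l; rewrite mem_filter => /andP [h _].
by rewrite setD_out // eq_sym.
Qed.

Lemma rho_addiota (a : A) (d : G) (e : Gj p n j) : rho a (d + iota e) = rho a d.
Proof. by rewrite addiota rho_setD. Qed.
End Shifts.


Section CS.
Variable (C : numClosedFieldType).

Lemma cauchy_schwarz (I : finType) (z : I -> C) :
  `|\sum_o z o| ^+ 2 <= #|I|%:R * \sum_o `|z o| ^+ 2.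
Proof.
set S := \sum_o z o.
have h0 : 0 <= \sum_o \sum_o' `|z o - z o'| ^+ 2.
  by apply: sumr_ge0 => o _; apply: sumr_ge0 => o' _; apply: exprn_ge0.
pose a o := `|z o| ^+ 2.
pose b o o' := z o * (z o')^*.
have E1 o o' : `|z o - z o'| ^+ 2 = a o + a o' - (b o o' + b o' o).
  by rewrite /a /b !normCK rmorphB /=; ring.
have e : \sum_o \sum_o' `|z o - z o'| ^+ 2 =
    (#|I|%:R * \sum_o a o - S * S^*) *+ 2.
  under eq_bigr => o _ do rewrite (eq_bigr _ (fun o' _ => E1 o o')) sumrB !big_split.
  rewrite sumrB !big_split /=.
  have -> : \sum_o \sum_o' b o o' = S * S^*.
    by rewrite /S rmorph_sum mulr_suml; apply: eq_bigr => o _; rewrite mulr_sumr.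
  have -> : \sum_o \sum_o' b o' o = S * S^*.
    by rewrite exchange_big /S rmorph_sum mulr_suml; apply: eq_bigr => o _; rewrite mulr_sumr.
  have -> : \sum_o \sum_(o' : I) a o = #|I|%:R * \sum_o a o.
    under eq_bigr => o _ do rewrite sumr_const.
    by rewrite sumrMnl mulr_natl.
  have -> : \sum_(o : I) \sum_o' a o' = #|I|%:R * \sum_o a o.
    by rewrite sumr_const mulr_natl.
  ring.
move: h0; rewrite e -mulr_natr pmulr_lge0 ?ltr0n // subr_ge0 normCK; apply.
Qed.
End CS.


Section Main.
Variables (R : realType) (p k : nat) (n : 'I_k -> nat) (r' : nat).
Variables (f : Gsum p n -> R[i]) (psi : {ffun 'I_r' -> Gsum p n} -> Gsum p n -> 'F_p).
Variables (i : 'I_r') (j : 'I_k).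
Hypothesis pp : prime p.
Hypothesis fb : forall x, `|f x| <= 1.
Hypothesis ml : multilinear psi.
Local Notation G := (Gsum p n).
Local Notation A := {ffun 'I_r' -> G}.
Local Notation V := (Gj p n j).
Local Notation P := ((A * G) * G)%type.
Local Notation om := (@omegaF p R).

Definition Fo (a : A) (d : G) : G -> R[i] := derivs (rho i j a d) f.
Definition T (o : P) : R[i] := derivs (shifts o.1.1 o.1.2) f o.2 * om (psi o.1.1 o.1.2).
Definition phi (e : V) (o : P) : P :=
  let: ((a, d), x) := o in
  ((setA a i (a i - x + iota (d j + e)), d + iota e), x - iota (d j + e)).
Definition L (o : P) (E : V) : R[i] :=
  let: ((a, d), x) := o in
  Fo a d (a i + iota E) * Fo a d (x - iota E) * om (psi (setA a i (a i - x + iota E)) (setD d E)).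
Definition cF (o : P) : R[i] :=
  let: ((a, d), x) := o in (Fo a d (a i))^* * (Fo a d x)^*.

Lemma Fo_bound a d x : `|Fo a d x| <= 1.
Proof. exact: derivs_bound. Qed.

Lemma T_phi o e : T (phi e o) = cF o * L o (o.1.2 j + e).
Proof.
case: o => [[a d] x] /=; rewrite /T /= (@derivs_shifts _ _ _ _ _ i j) /=.
rewrite rho_setA rho_addiota -/(Fo a d) setA_i gaddEl iota_j (addiota d e).
set E := d j + e.
have -> : x - iota E + (a i - x + iota E) = a i.
  exact: zid1.
have -> : x - iota E + iota E = x by rewrite subrK.

by rewrite /L /cF; ring.
Qed.

Lemma phi_inj e : injective (phi e).
Proof.
move=> [[a1 d1] x1] [[a2 d2] x2] /= [ha /addIr hd hx]; subst d2.
move/addIr: hx => hx; subst x2.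
have hi : a1 i = a2 i.
  by move/(congr1 (fun a : A => a i)): ha; rewrite !setA_i => /addIr /addIr.
congr ((_, _), _); apply/ffunP => m; have [->|nm] := eqVneq m i; first exact: hi.
by move/(congr1 (fun a : A => a m)): ha; rewrite !setA_out.
Qed.

Definition Lam (o : P) : R[i] := \sum_E L o E.

Lemma step1 : #|V|%:R * \sum_o T o = \sum_o cF o * Lam o.
Proof.
have -> : #|V|%:R * \sum_o T o = \sum_(e : V) \sum_o T o by rewrite sumr_const mulr_natl.
transitivity (\sum_(e : V) \sum_o T (phi e o)).
  by apply: eq_bigr => e _; rewrite (reindex_inj (@phi_inj e)).
rewrite exchange_big /=; apply: eq_bigr => o _.
under eq_bigr => e _ do rewrite T_phi.
by rewrite -mulr_sumr /Lam [in RHS](reindex_inj (addrI (o.1.2 j))).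
Qed.

Lemma cF_bound o : `|cF o| <= 1.
Proof.
case: o => [[a d] x] /=; rewrite normrM !norm_conjC.
by apply: mulr_ile1; rewrite ?normr_ge0 ?Fo_bound.
Qed.

Lemma step2 : `|\sum_o cF o * Lam o| ^+ 2 <= #|{: P}|%:R * \sum_o `|Lam o| ^+ 2.
Proof.
apply: le_trans (cauchy_schwarz _) _.
apply: ler_wpM2l; first exact: ler0n.
apply: ler_sum => o _; rewrite normrM exprMn.
apply: ler_piMl; first exact: exprn_ge0.
by apply: exprn_ile1; rewrite ?normr_ge0 ?cF_bound.
Qed.

Definition Omega : R[i] := \sum_o \sum_E \sum_E' L o E * (L o E')^*.

Lemma step3 : \sum_o `|Lam o| ^+ 2 = Omega.
Proof.
apply: eq_bigr => o _; rewrite normCK /Lam rmorph_sum mulr_suml.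
by apply: eq_bigr => E _; rewrite mulr_sumr.
Qed.

Definition tau (c : V) (o : P) : P :=
  let: ((a, d), x) := o in ((setA a i (a i + iota c), d), x - iota c).

Lemma tau_inj c : injective (tau c).
Proof.
move=> [[a1 d1] x1] [[a2 d2] x2] /= [ha hd /addIr hx]; subst d2 x2.
have hi : a1 i = a2 i.
  by move/(congr1 (fun a : A => a i)): ha; rewrite !setA_i => /addIr.
congr ((_, _), _); apply/ffunP => m; have [->|nm] := eqVneq m i; first exact: hi.
by move/(congr1 (fun a : A => a m)): ha; rewrite !setA_out.
Qed.

Lemma step4 c : Omega = \sum_o \sum_E \sum_E' L (tau c o) (E - c) * (L (tau c o) (E' - c))^*.
Proof.
rewrite /Omega (reindex_inj (@tau_inj c)); apply: eq_bigr => o _.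
rewrite (reindex_inj (addIr (- c))); apply: eq_bigr => E _.
by rewrite (reindex_inj (addIr (- c))).
Qed.

Lemma L_tau c o E :
  L (tau c o) (E - c) =
  let: ((a, d), x) := o in
  Fo a d (a i + iota E) * Fo a d (x - iota E) *
  om (psi (setA a i (a i - x + iota E + iota c)) (setD d (E - c))).
Proof.
case: o => [[a d] x] /=; rewrite /Fo rho_setA setA_i setA_setA iotaB.
by rewrite zid2 zid3 zid4.
Qed.

Lemma gscale1 (x : G) : gscale 1 x = x.
Proof. by apply/ffunP => l; rewrite ffunE scale1r. Qed.

Lemma lamD1 (a : A) (D : G) (x y : G) :
  psi (setA a i (x + y)) D = psi (setA a i x) D + psi (setA a i y) D.
Proof. by have := ml.1 a D i 1 x y; rewrite gscale1 mul1r. Qed.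

Lemma lamD2 (a : A) (d : G) (u v : V) :
  psi a (setD d (u + v)) = psi a (setD d u) + psi a (setD d v).
Proof. by have := ml.2 a d j 1 u v; rewrite scale1r mul1r. Qed.

Lemma lamN1 (a : A) (D : G) (x : G) : psi (setA a i (- x)) D = - psi (setA a i x) D.
Proof.
apply/eqP; rewrite -subr_eq0 opprK addrC -lamD1 subrr.
by apply/eqP; have := lamD1 a D 0 0; rewrite addr0 -{1}[psi _ _]addr0 => /addrI <-.
Qed.

Lemma lamN2 (a : A) (d : G) (u : V) : psi a (setD d (- u)) = - psi a (setD d u).
Proof.
apply/eqP; rewrite -subr_eq0 opprK addrC -lamD2 subrr.
by apply/eqP; have := lamD2 a d 0 0; rewrite addr0 -{1}[psi _ _]addr0 => /addrI <-.
Qed.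

Lemma phase (a : A) (d : G) (W : G) (E E' c : V) :
  psi (setA a i (W + iota E + iota c)) (setD d (E - c)) -
  psi (setA a i (W + iota E' + iota c)) (setD d (E' - c)) =
  (psi (setA a i (W + iota E)) (setD d E) - psi (setA a i (W + iota E')) (setD d E'))
  + psi' psi i a c (setD d (E - E')).
Proof.
rewrite /psi' setD_j setD_setD iotaB.
rewrite !lamD1 !lamN1 !lamD2 !lamN2.
ring.
Qed.

Definition Q (o : P) (w : V) : R[i] := \sum_(c : V) om (psi' psi i o.1.1 c (setD o.1.2 w)).

Lemma psi'_lin (a : A) (D : G) (c0 : 'F_p) (x y : V) :
  psi' psi i a (c0 *: x + y) D = c0 * psi' psi i a x D + psi' psi i a y D.
Proof.
rewrite /psi' iotaD iotaZ -gaddE ml.1 ml.2; ring.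
Qed.

Lemma Q_ge0 o w : 0 <= Q o w.
Proof.
rewrite /Q; apply: (@char_sum_ge0 R p pp (n j) (fun c => psi' psi i o.1.1 c (setD o.1.2 w))).
by move=> c0 x y; rewrite psi'_lin.
Qed.

Lemma step5 o E E' :
  `|\sum_(c : V) L (tau c o) (E - c) * (L (tau c o) (E' - c))^*| <= Q o (E - E').
Proof.
case: o => [[a d] x].
under eq_bigr => c _ do rewrite !L_tau.
set M := Fo a d (a i + iota E) * Fo a d (x - iota E) *
         (Fo a d (a i + iota E') * Fo a d (x - iota E'))^*.
set kap := psi (setA a i (a i - x + iota E)) (setD d E) - psi (setA a i (a i - x + iota E')) (setD d E').
have -> : \sum_(c : V)
   Fo a d (a i + iota E) * Fo a d (x - iota E) *
     om (psi (setA a i (a i - x + iota E + iota c)) (setD d (E - c))) *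
   (Fo a d (a i + iota E') * Fo a d (x - iota E') *
     om (psi (setA a i (a i - x + iota E' + iota c)) (setD d (E' - c))))^* =
   M * om kap * Q ((a, d), x) (E - E').
  rewrite /Q mulr_sumr; apply: eq_bigr => c _ /=.
  rewrite -[in RHS]mulrA -[in RHS]omegaF_add // -phase omegaF_add // omegaF_opp // /M rmorphM /=.
  ring.
rewrite normrM (ger0_norm (Q_ge0 _ _)); apply: ler_piMl; first exact: Q_ge0.
rewrite normrM omegaF_norm // mulr1 /M normrM !norm_conjC normrM normrM.
by apply: mulr_ile1; rewrite ?mulr_ge0 ?normr_ge0 //; apply: mulr_ile1; rewrite ?normr_ge0 ?Fo_bound.
Qed.

Lemma Omega_ge0 : 0 <= Omega.
Proof. by rewrite -step3; apply: sumr_ge0 => o _; apply: exprn_ge0; apply: normr_ge0. Qed.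

Lemma step6 : #|V|%:R * Omega <= \sum_o \sum_E \sum_E' Q o (E - E').
Proof.
rewrite -[X in X <= _]ger0_norm ?mulr_ge0 ?ler0n ?Omega_ge0 //.
have -> : #|V|%:R * Omega = \sum_o \sum_E \sum_E' \sum_(c : V)
      L (tau c o) (E - c) * (L (tau c o) (E' - c))^*.
  transitivity (\sum_(c : V) Omega); first by rewrite sumr_const mulr_natl.
  rewrite (eq_bigr _ (fun c _ => step4 c)) exchange_big /=; apply: eq_bigr => o _.
  rewrite exchange_big /=; apply: eq_bigr => E _.
  by rewrite exchange_big.
apply: le_trans (ler_norm_sum _ _ _) _; apply: ler_sum => o _.
apply: le_trans (ler_norm_sum _ _ _) _; apply: ler_sum => E _.
apply: le_trans (ler_norm_sum _ _ _) _; apply: ler_sum => E' _.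
exact: step5.
Qed.

Lemma sumP (g : P -> R[i]) :
  \sum_(o : P) g o = \sum_(a : A) \sum_(d : G) \sum_(x : G) g ((a, d), x).
Proof.
rewrite (pair_bigA _ (fun a d => \sum_(x : G) g ((a, d), x))) /=.
transitivity (\sum_(ad : A * G) \sum_(x : G) g (ad, x)); last by apply: eq_bigr => -[a d].
rewrite (pair_bigA _ (fun ad x => g (ad, x))) /=.
by apply: eq_bigr => -[[a d] x].
Qed.

Definition q (a : A) (d : G) : R[i] := \sum_(c : V) om (psi' psi i a c d).

Lemma sum_constC (T : finType) (x : R[i]) : \sum_(t : T) x = #|T|%:R * x.
Proof. by rewrite sumr_const mulr_natl. Qed.

Lemma inner7 (a : A) (d : G) :
  \sum_(E : V) \sum_(E' : V) q a (setD d (E - E')) = #|V|%:R * \sum_(e : V) q a (d + iota e).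
Proof.
rewrite exchange_big /= -sum_constC; apply: eq_bigr => E' _.
have hinj : injective (fun e : V => d j + e + E').
  by move=> e1 e2 /addIr /addrI.
rewrite (reindex_inj hinj) /=; apply: eq_bigr => e _.
by rewrite addrK addiota.
Qed.

Lemma step7 : \sum_o \sum_E \sum_E' Q o (E - E') =
  #|G|%:R * (#|V|%:R * (#|V|%:R * \sum_(a : A) \sum_(d : G) q a d)).
Proof.
rewrite sumP !mulr_sumr; apply: eq_bigr => a _.
transitivity (\sum_(d : G) \sum_(x : G) (#|V|%:R * \sum_(e : V) q a (d + iota e))).
  by apply: eq_bigr => d _; apply: eq_bigr => x _; rewrite -inner7.
under eq_bigr => d _ do rewrite sum_constC.
rewrite -mulr_sumr; congr (_ * _).
rewrite -mulr_sumr; congr (_ * _).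
rewrite exchange_big /= -sum_constC; apply: eq_bigr => e _.
by rewrite [in RHS](reindex_inj (addIr (@Defs.iota p k n j e))).
Qed.

Lemma main_ineq :
  #|V|%:R * `|\sum_o T o| ^+ 2 <= #|{: P}|%:R * (#|G|%:R * \sum_(a : A) \sum_(d : G) q a d).
Proof.
have v0 : (0 : R[i]) < #|V|%:R by rewrite ltr0n; apply/card_gt0P; exists 0.
have h1 : `|#|V|%:R * \sum_o T o| ^+ 2 <= #|{: P}|%:R * Omega.
  by rewrite step1 -step3; exact: step2.
have h2 := step6; rewrite step7 in h2.
rewrite normrM ger0_norm ?ler0n // exprMn in h1.
have h3 : #|V|%:R * (#|V|%:R ^+ 2 * `|\sum_o T o| ^+ 2) <=
    #|V|%:R * (#|V|%:R * (#|{: P}|%:R * (#|G|%:R * \sum_(a : A) \sum_(d : G) q a d))).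
  apply: le_trans (ler_wpM2l (ltW v0) h1) _.
  rewrite mulrCA; apply: le_trans (ler_wpM2l (ler0n _ _) h2) _.
  by rewrite le_eqVlt; apply/orP; left; apply/eqP; ring.
rewrite ler_pM2l // expr2 -mulrA ler_pM2l // in h3.
Qed.
End Main.


Unset Implicit Arguments.
Theorem proposition28 (R : realType) (p : nat) (k r : nat) (n : 'I_k -> nat)
  (f : Gsum p n -> R[i]) (xi : R)
  (psi : {ffun 'I_(r - 1) -> Gsum p n} -> Gsum p n -> 'F_p)
  (i : 'I_(r - 1)) (j : 'I_k) :
  prime p -> (1 <= k)%N -> (1 <= r)%N ->
  (forall x, `|f x| <= 1) ->
  0 < xi ->
  multilinear psi ->
  (xi%:C <=
    avg (fun a : {ffun 'I_(r - 1) -> Gsum p n} =>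
    avg (fun d : Gsum p n =>
    avg (fun x : Gsum p n =>
      derivs (shifts a d) f x * omegaF R (psi a d))))) ->
  (xi ^+ 8)%:C <= bias_psi' R psi i j.
Proof.
move=> pp _ _ fb xi0 ml hyp.
set a := (#|{: {ffun 'I_(r - 1) -> Gsum p n}}|%:R : R[i]).
set g := (#|{: Gsum p n}|%:R : R[i]).
set v := (#|{: Gj p n j}|%:R : R[i]).
have a0 : 0 < a by rewrite ltr0n; apply/card_gt0P; exists [ffun => 0].
have g0 : 0 < g by rewrite ltr0n; apply/card_gt0P; exists 0.
have v0 : 0 < v by rewrite ltr0n; apply/card_gt0P; exists 0.
set N := \sum_o T f psi o.
set B := \sum_(a0 : {ffun 'I_(r - 1) -> Gsum p n}) \sum_(d : Gsum p n) q R psi i j a0 d.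
have eT : N = \sum_(a0 : {ffun 'I_(r - 1) -> Gsum p n}) \sum_(d : Gsum p n) \sum_(x : Gsum p n)
    derivs (shifts a0 d) f x * omegaF R (psi a0 d) := sumP _.
have hs : xi%:C <= (a * (g * g))^-1 * N.
  move: hyp; congr (_ <= _).
  rewrite /avg eT -/a -/g !invfM -!mulrA; congr (_ * _).
  rewrite [in RHS]mulr_sumr [in RHS]mulr_sumr.
  under eq_bigr => b _ do rewrite mulr_sumr.
  under [RHS]eq_bigr => b _ do rewrite !mulr_sumr.
  by [].
have hb : bias_psi' R psi i j = (a * (v * g))^-1 * B.
  rewrite /bias_psi' /avg -/a -/v -/g !invfM -!mulrA; congr (_ * _).
  rewrite /B [in RHS]mulr_sumr [in RHS]mulr_sumr.
  under [RHS]eq_bigr => b _ do rewrite /q exchange_big /= mulr_sumr.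
  by [].
have hP : (#|{: ({ffun 'I_(r - 1) -> Gsum p n} * Gsum p n) * Gsum p n}|%:R : R[i]) = a * (g * g).
  by rewrite !card_prod !natrM -/a -/g mulrA.
have hm := main_ineq i j pp fb ml.
rewrite -/N -/B -/v -/g hP in hm.
have hT o : `|T f psi o| <= 1.
  rewrite /T normrM omegaF_norm // mulr1; exact: derivs_bound.
have hN : `|N| <= a * (g * g).
  apply: le_trans (ler_norm_sum _ _ _) _; rewrite -hP -[X in _ <= X]mulr1 -sum_constC.
  by apply: ler_sum => o _; exact: hT.
set s := (a * (g * g))^-1 * N in hs.
have agg0 : 0 < a * (g * g) by rewrite !mulr_gt0.
have eN : N = (a * (g * g)) * s by rewrite /s mulVKf // gt_eqF.
have xi0C : 0 <= xi%:C by rewrite lecR ltW.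
have s0 : 0 <= s := le_trans xi0C hs.
have s1 : s <= 1.
  have hinv : 0 <= (a * (g * g))^-1 by rewrite invr_ge0 ltW.
  rewrite -(ger0_norm s0) /s normrM (ger0_norm hinv) ler_pdivrMl // mulr1.
  exact: hN.
have key : (a * (v * g)) * s ^+ 2 <= B.
  rewrite eN normrM (ger0_norm (ltW agg0)) (ger0_norm s0) in hm.
  have : (a * (g * g)) * (g * ((a * (v * g)) * s ^+ 2)) <= (a * (g * g)) * (g * B).
    apply: le_trans hm; rewrite le_eqVlt; apply/orP; left; apply/eqP; ring.
  by rewrite ler_pM2l // ler_pM2l.
have avg0 : 0 < a * (v * g) by rewrite !mulr_gt0.
have xi1 : xi <= 1 by rewrite -lecR; exact: le_trans hs s1.
have x82 : xi ^+ 8 <= xi ^+ 2.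
  rewrite (_ : 8 = 2 + 6)%N // exprD; apply: ler_piMr; first exact: exprn_ge0 (ltW xi0).
  by apply: exprn_ile1; [exact: ltW | exact: xi1].
have h2 : (xi ^+ 8)%:C <= s ^+ 2.
  apply: le_trans (_ : (xi%:C) ^+ 2 <= _).
    by rewrite -rmorphXn /= lecR.
  by apply: lerXn2r; rewrite // nnegrE.
rewrite hb ler_pdivlMl //; apply: le_trans key.
by apply: ler_wpM2l; [exact: ltW | exact: h2].
Qed.
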